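(* Let $d\ge 0$, $n\ge 1$ and $p$ prime. If $c,c'\in C(d,n,p)$, then both $\operatorname{lcm}(c,c')=(\max(c_1,c_1'),\dots,\max(c_M,c_M'))$ and $\gcd(c,c')=(\min(c_1,c_1'),\dots,\min(c_M,c_M'))$ belong to $C(d,n,p)$. Consequently $C(d,n,p)$, with the componentwise partial order ($c\le c'$ iff $c_i\le c_i'$ for all $i$), is a finite lattice, and in particular it has a unique maximal element.
   Context: Let $p$ be a prime. Every integer $a\ge0$ has base-$p$ expansion $a=\sum_{j\ge0}a_jp^j$ with digits $0\le a_j\le p-1$. For $d\ge1$ let $M=\max\{j: d_j\ne0\}$. Let $S=\mathbf{k}[x_1,\dots,x_n]$ with $\mathbf k$ algebraically closed of characteristic $p$. For a monomial $x^{\underline b}=x_1^{b_1}\cdots x_n^{b_n}$ of degree $d=b_1+\cdots+b_n$, write $b_{i,j}$ for the $j$-th base-$p$ digit of $b_i$. Its carry pattern is $c(\underline b)=(c_1,\dots,c_M)$, the integers determined by $\sum_{i=1}^n\sum_{0\le j<\ell} b_{i,j}p^j = c_\ell p^\ell+\sum_{0\le j<\ell} d_jp^j$ for $1\le \ell\le M$ (with the convention $c_i=0$ for $i<1$ and $i>M$); i.e. $c_\ell$ is the amount carried into the $p^\ell$ column when adding $b_1,\dots,b_n$ in base $p$. $C(d,n,p)$ denotes the set of all carry patterns of degree-$d$ monomials in $n$ variables (for $d=0$ it consists of the empty sequence). *)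

(* Defs.v *)
From mathcomp Require Import all_boot.
Set Implicit Arguments. Unset Strict Implicit. Unset Printing Implicit Defensive.

Definition digit (p a j : nat) : nat := (a %/ p ^ j) %% p.

(* M = max {j : d_j <> 0}; the bound j <= d suffices since p^j > d for j > d
   when p >= 2.  For d = 0 this is 0, so the carry pattern is empty. *)
Definition topM (p d : nat) : nat := \max_(j < d.+1 | digit p d j != 0) (j : nat).

(* c is the carry pattern (c_1,...,c_M), c_l = nth 0 c l.-1, of the monomial
   with exponent vector b (b_i is the exponent of x_i) *)
Definition is_carry_pattern (p d : nat) {n : nat} (b : 'I_n -> nat) (c : seq nat) : Prop :=
  size c = topM p d /\
  forall l, 1 <= l <= topM p d ->
    \sum_(i < n) \sum_(0 <= j < l) digit p (b i) j * p ^ j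
    = nth 0 c l.-1 * p ^ l + \sum_(0 <= j < l) digit p d j * p ^ j.

Definition inC (d n p : nat) (c : seq nat) : Prop :=
  exists b : 'I_n -> nat, \sum_(i < n) b i = d /\ is_carry_pattern p d b c.

Definition lcm_cp (c c' : seq nat) : seq nat := [seq maxn x.1 x.2 | x <- zip c c'].
Definition gcd_cp (c c' : seq nat) : seq nat := [seq minn x.1 x.2 | x <- zip c c'].

Definition cp_le (c c' : seq nat) : bool := all2 leq c c'.

Definition is_maximal_in (P : seq nat -> Prop) (m : seq nat) : Prop :=
  P m /\ forall c, P c -> cp_le m c -> c = m.

(* Main.v *)
Require Import Defs.
From mathcomp Require Import all_boot.
From mathcomp Require Import zify.
From Stdlib Require Import Classical.
Set Implicit Arguments. Unset Strict Implicit. Unset Printing Implicit Defensive.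
Lemma mod_step p a l : 0 < p -> a %% p ^ l.+1 = a %% p ^ l + digit p a l * p ^ l.
Proof.
move=> p0; rewrite /digit.
have Pl : 0 < p ^ l by rewrite expn_gt0 p0.
set q := a %/ p ^ l.
have ha : a = (q %/ p) * p ^ l.+1 + (q %% p * p ^ l + a %% p ^ l).
  rewrite {1}(divn_eq a (p ^ l)) -/q {1}(divn_eq q p) expnSr.
  rewrite mulnDl -mulnA (mulnC p) addnA //.
rewrite {1}ha modnMDl modn_small; first by rewrite addnC.
have h1 : q %% p < p by rewrite ltn_pmod.
have h2 : a %% p ^ l < p ^ l by rewrite ltn_pmod.
apply: (leq_trans (n:= q %% p * p ^ l + p ^ l)); first by rewrite ltn_add2l.
by rewrite -mulSnr expnSr mulnC leq_mul2l h1 orbT.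
Qed.

Lemma digsum p a l : 0 < p -> \sum_(0 <= j < l) digit p a j * p ^ j = a %% p ^ l.
Proof.
move=> p0; elim: l => [|l IH]; first by rewrite big_geq // expn0 modn1.
by rewrite big_nat_recr //= IH mod_step.
Qed.

Lemma lt_sum p (e : nat -> nat) l : 0 < p -> (forall j, e j < p) ->
  \sum_(0 <= j < l) e j * p ^ j < p ^ l.
Proof.
move=> p0 he; elim: l => [|l IH]; first by rewrite big_geq.
rewrite big_nat_recr //=.
apply: (leq_trans (n:= e l * p ^ l + p ^ l)); first by rewrite addnC ltn_add2l.
by rewrite -mulSnr expnSr mulnC leq_mul2l he orbT.
Qed.

Lemma mod_sum p (e : nat -> nat) K l : 0 < p -> (forall j, e j < p) -> l <= K ->
  (\sum_(0 <= j < K) e j * p ^ j) %% p ^ l = \sum_(0 <= j < l) e j * p ^ j.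
Proof.
move=> p0 he lK.
rewrite (@big_cat_nat _ _ _ l) /=; last by []; last by [].
have H : p ^ l %| \sum_(l <= j < K) e j * p ^ j.
  rewrite big_nat_cond; apply: dvdn_sum => j /andP[/andP[hj _] _].
  by apply: dvdn_mull; rewrite dvdn_exp2l.
rewrite addnC -(divnK H) modnMDl modn_small //; exact: lt_sum.
Qed.

Lemma greedy k s n : \sum_(i < n) minn k (s - i * k) = minn s (n * k).
Proof.
elim: n => [|n IH]; first by rewrite big_ord0 mul0n minn0.
rewrite big_ord_recr /= IH mulSn; lia.
Qed.

Definition cc (c : seq nat) l := if l is l'.+1 then nth 0 c l' else 0.

Definition good d n p c := size c = topM p d /\ forall l, l <= topM p d ->
  cc c l <= p * cc c l.+1 + digit p d l <= cc c l + n * (p - 1).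

Lemma T_le p d : topM p d <= d.
Proof. rewrite /topM; apply/bigmax_leqP => j _; rewrite -ltnS; exact: ltn_ord. Qed.

Lemma T_dig p d j : 1 < p -> topM p d < j -> digit p d j = 0.
Proof.
move=> p1 hM; case: (ltnP j d.+1) => hj.
  apply/eqP; apply: contraTT hM => nz; rewrite -leqNgt.
  exact: (@leq_bigmax_cond _ (fun j : 'I_d.+1 => digit p d j != 0) (fun j => j : nat) (Ordinal hj) nz).
rewrite /digit divn_small ?mod0n //.
exact: leq_trans hj (ltnW (ltn_expl j p1)).
Qed.

Lemma T_mod p d K : 1 < p -> topM p d < K -> d %% p ^ K = d.
Proof.
move=> p1 hK.
have p0 : 0 < p by apply: ltnW.
have stab : forall k, d %% p ^ ((topM p d).+1 + k) = d %% p ^ (topM p d).+1.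
  elim=> [|k IH]; first by rewrite addn0.
  by rewrite addnS mod_step // IH T_dig // ?muln0 ?addn0 // ltnS leq_addr.
have e1 : d %% p ^ (topM p d).+1 = d.
  have ee : (topM p d).+1 + (d - topM p d) = d.+1 by have := T_le p d; lia.
  have := stab (d - topM p d); rewrite ee => <-.
  rewrite modn_small //; exact: ltnW (ltn_expl d.+1 p1).
by rewrite -(subnKC hK) stab e1.
Qed.

Lemma fwd d n p c : 1 < p -> inC d n p c -> good d n p c /\ all (fun x => x <= d) c.
Proof.
move=> p1 [b [hsum [hsz hcar]]].
have p0 : 0 < p by apply: ltnW.
have bi_le : forall i, b i <= d by move=> i; rewrite -hsum (bigD1 i) //= leq_addr.
have E : forall l, \sum_(i < n) b i %% p ^ l = cc c l * p ^ l + d %% p ^ l.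
  case=> [|l].
    rewrite expn0 modn1 /= mul0n add0n; apply: big1 => i _; exact: modn1.
  case: (leqP l.+1 (topM p d)) => hl.
    have hl' : 1 <= l.+1 <= topM p d by rewrite hl.
    have := hcar l.+1 hl'; rewrite /= digsum // => <-; apply: eq_bigr => i _; by rewrite digsum.
  rewrite /= nth_default; last by rewrite hsz.
  rewrite mul0n add0n T_mod //; rewrite -{1}hsum; apply: eq_bigr => i _.
  rewrite modn_small //; apply: leq_ltn_trans (bi_le i) _.
  by rewrite -{1}(T_mod p1 hl) ltn_pmod // expn_gt0 p0.
have D : forall l, p * cc c l.+1 + digit p d l = cc c l + \sum_(i < n) digit p (b i) l.
  move=> l; have := E l.+1.
  rewrite (eq_bigr (fun i => b i %% p ^ l + digit p (b i) l * p ^ l)); last by move=> i _; rewrite mod_step.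
  rewrite big_split /= -big_distrl /= E mod_step // expnS => h.
  apply/eqP; rewrite -(@eqn_pmul2r (p ^ l)) ?expn_gt0 ?p0 //; apply/eqP.
  rewrite mulnDl mulnDl (mulnC p) -mulnA; lia.
split.
  split => // l _; rewrite D leq_addr /= leq_add2l.
  have : \sum_(i<n) digit p (b i) l <= \sum_(i<n) (p-1).
    apply: leq_sum => i _; have := ltn_pmod (b i %/ p^l) p0; rewrite /digit; lia.
  by rewrite sum_nat_const card_ord.
apply/(all_nthP 0) => i hi; have := E i.+1; rewrite /= => h.
apply: (leq_trans (n := nth 0 c i * p ^ i.+1)); first by rewrite leq_pmulr // expn_gt0 p0.
apply: (leq_trans (n := \sum_(i0<n) b i0 %% p^i.+1)); first by rewrite h leq_addr.
rewrite -{1}hsum; apply: leq_sum => j _; exact: leq_mod.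
Qed.

Lemma bwd d n p c : 1 < p -> good d n p c -> inC d n p c.
Proof.
move=> p1 [hsz hg].
have p0 : 0 < p by apply: ltnW.
pose M := topM p d.
pose s l := p * cc c l.+1 + digit p d l - cc c l.
pose e (i : 'I_n) l := minn (p-1) (s l - i * (p-1)).
pose b (i : 'I_n) := \sum_(0 <= l < M.+1) e i l * p ^ l.
have he : forall i l, e i l < p by move=> i l; rewrite /e; lia.
have hse : forall l, l <= M -> \sum_(i<n) e i l = s l.
  move=> l hl; rewrite /e greedy; have := hg l hl; rewrite /s; lia.
have hmod : forall l, l <= M.+1 -> \sum_(i<n) b i %% p^l = \sum_(0<=j<l) s j * p^j.
  move=> l hl.
  rewrite (eq_bigr (fun i => \sum_(0<=j<l) e i j * p^j)); last by move=> i _; rewrite /b mod_sum.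
  rewrite exchange_big /=; apply: eq_big_nat => j /andP[_ hj].
  by rewrite -big_distrl /= hse //; rewrite -ltnS; apply: leq_trans hj hl.
have htel : forall l, l <= M.+1 -> \sum_(0<=j<l) s j * p^j = cc c l * p^l + d %% p^l.
  elim=> [|l IH] hl; first by rewrite big_geq // /= mul0n expn0 modn1.
  rewrite big_nat_recr //= IH ?(ltnW hl) // mod_step //.
  have := hg l hl; case/andP=> h1 _.
  have h2 := leq_mul h1 (leqnn (p ^ l)); rewrite mulnDl in h2.
  rewrite /s mulnBl mulnDl expnS mulnA (mulnC (cc c l.+1) p); lia.
exists b; split.
  transitivity (\sum_(i<n) b i %% p^M.+1).
    apply: eq_bigr => i _; rewrite modn_small //; exact: lt_sum.
  rewrite hmod // htel // /= nth_default; last by rewrite hsz.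
  by rewrite mul0n add0n T_mod.
split => // l /andP[l1 lM].
rewrite (eq_bigr (fun i => b i %% p^l)); last by move=> i _; rewrite digsum.
rewrite hmod ?htel ?(leqW lM) // digsum //; by case: l l1 {lM}.
Qed.

Lemma nth_lcm c c' i : size c = size c' ->
  nth 0 (lcm_cp c c') i = maxn (nth 0 c i) (nth 0 c' i).
Proof.
move=> hs; case: (ltnP i (size c)) => hi.
  rewrite (nth_map (0,0)); last by rewrite size_zip -hs minnn.
  by rewrite nth_zip.
rewrite !nth_default //; last by rewrite size_map size_zip -hs minnn.
by rewrite -hs.
Qed.

Lemma nth_gcd c c' i : size c = size c' ->
  nth 0 (gcd_cp c c') i = minn (nth 0 c i) (nth 0 c' i).
Proof.
move=> hs; case: (ltnP i (size c)) => hi.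
  rewrite (nth_map (0,0)); last by rewrite size_zip -hs minnn.
  by rewrite nth_zip.
rewrite !nth_default //; last by rewrite size_map size_zip -hs minnn.
by rewrite -hs.
Qed.

Lemma good_lcm d n p c c' : good d n p c -> good d n p c' -> good d n p (lcm_cp c c').
Proof.
move=> [hs hg] [hs' hg']; split.
  by rewrite size_map size_zip hs hs' minnn.
move=> l hl.
have ccl : forall k, cc (lcm_cp c c') k = maxn (cc c k) (cc c' k).
  by case=> //= k; rewrite nth_lcm // hs hs'.
rewrite !ccl maxnMr; have := hg l hl; have := hg' l hl.
move: (cc c l) (cc c' l) (p * cc c l.+1) (p * cc c' l.+1) (n * (p - 1)) => x x' y y' K.
lia.
Qed.

Lemma good_gcd d n p c c' : good d n p c -> good d n p c' -> good d n p (gcd_cp c c').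
Proof.
move=> [hs hg] [hs' hg']; split.
  by rewrite size_map size_zip hs hs' minnn.
move=> l hl.
have ccl : forall k, cc (gcd_cp c c') k = minn (cc c k) (cc c' k).
  by case=> //= k; rewrite nth_gcd // hs hs'.
rewrite !ccl minnMr; have := hg l hl; have := hg' l hl.
move: (cc c l) (cc c' l) (p * cc c l.+1) (p * cc c' l.+1) (n * (p - 1)) => x x' y y' K.
lia.
Qed.

Fixpoint allseqs (d k : nat) : seq (seq nat) :=
  if k is k'.+1 then [seq x :: s | x <- iota 0 d.+1, s <- allseqs d k'] else [:: [::]].

Lemma in_allseqs d s : all (fun x => x <= d) s -> s \in allseqs d (size s).
Proof.
elim: s => [|x s IH] //; move=> /andP[hx hs].
change (x :: s \in [seq y :: t | y <- iota 0 d.+1, t <- allseqs d (size s)]).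
apply/allpairsP; exists (x, s); split => //; last exact: IH.
by rewrite mem_iota add0n ltnS hx.
Qed.

Lemma enum_fin (P : seq nat -> Prop) (L : seq (seq nat)) : (forall c, P c -> c \in L) ->
  exists s : seq (seq nat), forall c, P c <-> c \in s.
Proof.
elim: L P => [|x L IH] P hP.
  by exists [::] => c; split => // /hP.
have [s hs] : exists s : seq (seq nat), forall c, (P c /\ c <> x) <-> c \in s.
  apply: IH => c [pc ne]; have := hP c pc; rewrite inE; case/orP => // /eqP /ne [].
case: (classic (P x)) => px.
  exists (x :: s) => c; rewrite inE; split.
    move=> pc; case: (eqVneq c x) => [->|ne]; first by apply/orP; left.
    by apply/orP; right; apply/hs; split => //; apply/eqP.
  by case/orP => [/eqP->|/hs []].
exists s => c; rewrite -hs; split; last by case.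
by move=> pc; split => // e; subst.
Qed.

Lemma cp_le_nth c c' : cp_le c c' -> forall i, nth 0 c i <= nth 0 c' i.
Proof.
elim: c c' => [|x c IH] [|y c'] //= /andP[h1 h2] [|i] //=; exact: IH.
Qed.

Lemma nth_cp_le c c' : size c = size c' -> (forall i, nth 0 c i <= nth 0 c' i) -> cp_le c c'.
Proof.
elim: c c' => [|x c IH] [|y c'] //= [hs] h.
by rewrite (h 0) /=; apply: IH => // i; exact: (h i.+1).
Qed.

Theorem mainTheorem1 (d n p : nat) (hn : 1 <= n) (hp : prime p) :
  (forall c c', inC d n p c -> inC d n p c' ->
     inC d n p (lcm_cp c c') /\ inC d n p (gcd_cp c c'))
  /\ (exists s : seq (seq nat), forall c, inC d n p c <-> c \in s)
  /\ (exists m, is_maximal_in (inC d n p) m /\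
        forall m', is_maximal_in (inC d n p) m' -> m' = m).
Proof.
have p1 : 1 < p := prime_gt1 hp.
have gE : forall c, inC d n p c <-> good d n p c.
  move=> c; split; [by case/(fwd p1) | exact: bwd].
have part2 : exists s : seq (seq nat), forall c, inC d n p c <-> c \in s.
  apply: (enum_fin (L := allseqs d (topM p d))) => c /(fwd p1) [[hs _] ha].
  by rewrite -hs; exact: in_allseqs.
split.
  move=> c c' /gE hc /gE hc'; split; apply/gE; [exact: good_lcm | exact: good_gcd].
split => //.
have [s hs] := part2.
pose c0 := nseq (topM p d) 0.
have g0 : good d n p c0.
  split; first by rewrite size_nseq.
  have cc0 : forall k, cc c0 k = 0 by case=> //= k; rewrite nth_nseq; case: ifP.
  move=> l _; rewrite !cc0 muln0 !add0n /=.
  have := ltn_pmod (d %/ p^l) (ltnW p1); rewrite /digit => h.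
  apply: leq_trans (leq_pmull (p-1) hn); lia.
have key : forall t : seq (seq nat), (forall c, c \in t -> good d n p c) ->
   good d n p (foldr lcm_cp c0 t) /\
   forall c, c \in t -> forall i, nth 0 c i <= nth 0 (foldr lcm_cp c0 t) i.
  elim=> [|x t IH] ht; first by split.
  have [gt le] := IH (fun c hc => ht c (@mem_behead _ (x :: t) c hc)).
  have gx := ht x (mem_head x t).
  split; first exact: good_lcm.
  move=> c; rewrite inE /= => /orP [/eqP -> | hc] i;
    rewrite nth_lcm; try by rewrite (proj1 gx) (proj1 gt).
    exact: leq_maxl.
  exact: leq_trans (le c hc i) (leq_maxr _ _).
have [gm lem] := key s (fun c hc => proj1 (gE c) (proj2 (hs c) hc)).
exists (foldr lcm_cp c0 s); split.
  split; first exact/gE.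
  move=> c hc hle; apply: (eq_from_nth (x0 := 0)).
    by rewrite (proj1 (proj1 (gE c) hc)) (proj1 gm).
  move=> i _; apply/eqP; rewrite eqn_leq lem ?(cp_le_nth hle) //; exact/hs.
move=> m' [hm' hmax]; symmetry; apply: hmax; first exact/gE.
apply: nth_cp_le; first by rewrite (proj1 (proj1 (gE _) hm')) (proj1 gm).
move=> i; apply: lem; exact/hs.
Qed.
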